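(* Let $v$ be a nonzero vector of $\mathbb{F}_4^n$ and, for $1\le k\le n$, let $\sigma_k$ be the number of self-orthogonal additive codes over $\mathbb{F}_4$ of length $n$ and dimension $k$ containing $v$. Then \[ \sigma_k=\prod_{i=1}^{k-1}\frac{2^{2(n-i)}-1}{2^i-1} \] (with the empty product equal to $1$); in particular $\sigma_k$ does not depend on $v$.
   Context: $\mathbb{F}_4=\{0,1,\omega,\omega^2\}$ with $\omega^2=\omega+1$, $\bar x:=x^2$. Trace inner product $\langle u,v\rangle=\sum_{i}(u_i\bar v_i+\bar u_i v_i)\in\mathbb{F}_2$ on $\mathbb{F}_4^n$. An additive code of length $n$ is an $\mathbb{F}_2$-subspace of $\mathbb{F}_4^n$, with dimension meaning $\mathbb{F}_2$-dimension; $C^\perp$ is its dual under the trace inner product, and $C$ is self-orthogonal if $C\subseteq C^\perp$. *)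

(* Defs.v *)
From HB Require Import structures.
From mathcomp Require Import all_boot all_order all_algebra.
Set Implicit Arguments. Unset Strict Implicit. Unset Printing Implicit Defensive.
Import GRing.Theory.
Local Open Scope ring_scope.

(* The field F_4 = {0, 1, w, w^2} with w^2 = w + 1. *)
Inductive F4 := F0 | F1 | Fw | Fw2.

Definition F4_enc (x : F4) : bool * bool :=
  match x with F0 => (false, false) | F1 => (true, false)
  | Fw => (false, true) | Fw2 => (true, true) end.
Definition F4_dec (p : bool * bool) : F4 :=
  match p with (false, false) => F0 | (true, false) => F1
  | (false, true) => Fw | (true, true) => Fw2 end.
Lemma F4_encK : cancel F4_enc F4_dec. Proof. by case. Qed.

HB.instance Definition _ := Equality.copy F4 (can_type F4_encK).
HB.instance Definition _ := Choice.copy F4 (can_type F4_encK).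
HB.instance Definition _ := Countable.copy F4 (can_type F4_encK).
HB.instance Definition _ := Finite.copy F4 (can_type F4_encK).

Definition F4_add (x y : F4) : F4 :=
  match x, y with
  | F0, z | z, F0 => z
  | F1, F1 | Fw, Fw | Fw2, Fw2 => F0
  | F1, Fw | Fw, F1 => Fw2
  | F1, Fw2 | Fw2, F1 => Fw
  | Fw, Fw2 | Fw2, Fw => F1
  end.

Definition F4_mul (x y : F4) : F4 :=
  match x, y with
  | F0, _ | _, F0 => F0
  | F1, z | z, F1 => z
  | Fw, Fw => Fw2
  | Fw, Fw2 | Fw2, Fw => F1
  | Fw2, Fw2 => Fw
  end.

Definition F4_conj (x : F4) : F4 := F4_mul x x.

Lemma F4_addA : associative F4_add. Proof. by do 3!case. Qed.
Lemma F4_addC : commutative F4_add. Proof. by do 2!case. Qed.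
Lemma F4_add0 : left_id F0 F4_add. Proof. by case. Qed.
Lemma F4_addNr : left_inverse F0 id F4_add. Proof. by case. Qed.

HB.instance Definition _ :=
  GRing.isZmodule.Build F4 F4_addA F4_addC F4_add0 F4_addNr.

Definition word (n : nat) := {ffun 'I_n -> F4}.

Definition trace_ip (n : nat) (u v : word n) : F4 :=
  \sum_(i < n) (F4_mul (u i) (F4_conj (v i)) + F4_mul (F4_conj (u i)) (v i)).

Definition f2comb (n k : nat) (b : {ffun 'I_k -> word n}) (c : {ffun 'I_k -> bool}) : word n :=
  \sum_(i < k) (if c i then b i else 0).

Definition is_f2basis (n k : nat) (C : {set word n}) (b : {ffun 'I_k -> word n}) : bool :=
  [forall c : {ffun 'I_k -> bool}, (f2comb b c == 0) ==> [forall i, ~~ c i]] &&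
  (C == [set f2comb b c | c : {ffun 'I_k -> bool}]).

Definition additive_code_dim (n k : nat) (C : {set word n}) : bool :=
  [exists b : {ffun 'I_k -> word n}, is_f2basis C b].

Definition self_orthogonal (n : nat) (C : {set word n}) : bool :=
  [forall u in C, forall w in C, trace_ip u w == 0].

Definition sigma (n k : nat) (v : word n) : nat :=
  #|[set C : {set word n} | [&& additive_code_dim k C, self_orthogonal C & v \in C]]|.

(* Main.v *)
Require Import Defs.
From mathcomp Require Import all_boot all_order all_algebra.
From mathcomp Require Import zify.
Import GRing.Theory Num.Theory.
Local Open Scope ring_scope.
Set Implicit Arguments. Unset Strict Implicit. Unset Printing Implicit Defensive.

Lemma F4_card : #|{: F4}| = 4%N.
Proof.
have -> : #|{: F4}| = #|{: bool * bool}|.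
  apply: bij_eq_card; exists F4_dec; first exact: F4_encK.
  by case=> [[] []].
by rewrite card_prod card_bool.
Qed.

Lemma wE n (x y : word n) i : (x + y) i = x i + y i.
Proof. by rewrite ffunE. Qed.
Lemma w0 n i : (0 : word n) i = 0.
Proof. by rewrite ffunE. Qed.
Lemma F1F1 : (F1 + F1 = 0 :> F4). Proof. by []. Qed.

Definition trc (a b : F4) : F4 :=
  F4_mul a (F4_conj b) + F4_mul (F4_conj a) b.

Lemma trcDl a a' b : trc (a + a') b = trc a b + trc a' b.
Proof. by case: a; case: a'; case: b. Qed.
Lemma trcC a b : trc a b = trc b a.
Proof. by case: a; case: b. Qed.
Lemma trcxx a : trc a a = 0.
Proof. by case: a. Qed.
Lemma trc0l b : trc 0 b = 0.
Proof. by case: b. Qed.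
Lemma trc01 a b : (trc a b == 0) || (trc a b == F1).
Proof. by case: a; case: b. Qed.
Lemma F4xx (a : F4) : a + a = 0.
Proof. by case: a. Qed.

Lemma addxx n (x : word n) : x + x = 0.
Proof. by apply/ffunP=> i; rewrite !ffunE F4xx. Qed.

Lemma addKx n (a x : word n) : a + (a + x) = x.
Proof. by rewrite addrA addxx add0r. Qed.

Section W.
Variable n : nat.
Notation B := (@trace_ip n).

Lemma BE (u w : word n) : B u w = \sum_(i < n) trc (u i) (w i).
Proof. by []. Qed.

Lemma BDl (u u' w : word n) : B (u + u') w = B u w + B u' w.
Proof. rewrite !BE -big_split; apply: eq_bigr => i _; by rewrite ffunE trcDl. Qed.
Lemma BC (u w : word n) : B u w = B w u.
Proof. rewrite !BE; apply: eq_bigr => i _; by rewrite trcC. Qed.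
Lemma BDr (u w w' : word n) : B u (w + w') = B u w + B u w'.
Proof. by rewrite BC BDl !(BC u). Qed.
Lemma Bxx (u : word n) : B u u = 0.
Proof. rewrite BE big1 // => i _; exact: trcxx. Qed.
Lemma B0l (w : word n) : B 0 w = 0.
Proof. rewrite BE big1 // => i _; by rewrite ffunE trc0l. Qed.
Lemma B01 (u w : word n) : (B u w == 0) || (B u w == F1).
Proof.
rewrite BE; apply: (big_ind (fun z : F4 => (z == 0) || (z == F1))) => //.
  by move=> x y; case: x; case: y.
move=> i _; exact: trc01.
Qed.

Lemma Bnondeg (y : word n) : y != 0 -> exists x, B x y = F1.
Proof.
move=> ny.
have [i yi] : exists i, y i != 0.
  apply/existsP; apply: contraR ny; rewrite negb_exists => /forallP H.
  by apply/eqP/ffunP=> i; rewrite ffunE; move: (H i); rewrite negbK => /eqP.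
exists [ffun j => if j == i then (if y i == F1 then Fw else F1) else F0].
rewrite BE (bigD1 i) //= big1 ?addr0.
  rewrite ffunE eqxx; move: yi; by case: (y i).
move=> j /negbTE ji; by rewrite ffunE ji trc0l.
Qed.
End W.

Section Cons.
Variable T : Type.
Definition fcons m (x : T) (g : {ffun 'I_m -> T}) : {ffun 'I_m.+1 -> T} :=
  [ffun i => if unlift ord0 i is Some j then g j else x].
Definition ftail m (b : {ffun 'I_m.+1 -> T}) : {ffun 'I_m -> T} :=
  [ffun j => b (lift ord0 j)].
Lemma fcons0 m (x : T) (g : {ffun 'I_m -> T}) : fcons x g ord0 = x.
Proof. by rewrite ffunE unlift_none. Qed.
Lemma fconsS m (x : T) (g : {ffun 'I_m -> T}) j : fcons x g (lift ord0 j) = g j.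
Proof. by rewrite ffunE liftK. Qed.
Lemma fcons_eta m (b : {ffun 'I_m.+1 -> T}) : b = fcons (b ord0) (ftail b).
Proof.
apply/ffunP=> i; rewrite ffunE; case: unliftP => [j ->|->] //.
by rewrite ffunE.
Qed.
Lemma ftail_fcons m (x : T) (g : {ffun 'I_m -> T}) : ftail (fcons x g) = g.
Proof. by apply/ffunP=> j; rewrite ffunE fconsS. Qed.
Lemma fcons_max m (x : T) (g : {ffun 'I_m.+1 -> T}) : fcons x g ord_max = g ord_max.
Proof.
have -> : (ord_max : 'I_m.+2) = lift ord0 ord_max by apply/val_inj.
by rewrite fconsS.
Qed.
End Cons.

Lemma forall_cons (T : Type) m x (g : {ffun 'I_m -> T}) (p : pred T) :
  [forall j, p (fcons x g j)] = p x && [forall j, p (g j)].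
Proof.
apply/forallP/andP => [H|[px /forallP H] i].
  split; first by move: (H ord0); rewrite fcons0.
  by apply/forallP=> j; move: (H (lift ord0 j)); rewrite fconsS.
by case: (unliftP ord0 i) => [j ->|->]; rewrite ?fconsS ?fcons0.
Qed.

Section Span.
Variable n : nat.
Implicit Types (x y z : word n).

Definition span m (b : {ffun 'I_m -> word n}) : {set word n} :=
  [set f2comb b c | c : {ffun 'I_m -> bool}].
Definition indep m (b : {ffun 'I_m -> word n}) : bool :=
  [forall c : {ffun 'I_m -> bool}, (f2comb b c == 0) ==> [forall i, ~~ c i]].

Lemma f2comb_cons m x (g : {ffun 'I_m -> word n}) c0 c :
  f2comb (fcons x g) (fcons c0 c) = (if c0 then x else 0) + f2comb g c.
Proof.
rewrite /f2comb big_ord_recl !fcons0; congr (_ + _).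
by apply: eq_bigr => i _; rewrite !fconsS.
Qed.

Lemma f2combD m (b : {ffun 'I_m -> word n}) c c' :
  f2comb b c + f2comb b c' = f2comb b [ffun i => c i (+) c' i].
Proof.
rewrite /f2comb -big_split; apply: eq_bigr => i _; rewrite ffunE.
by case: (c i); case: (c' i); rewrite /= ?addr0 ?add0r ?addxx.
Qed.

Lemma f2comb0 m (b : {ffun 'I_m -> word n}) : f2comb b [ffun => false] = 0.
Proof. by rewrite /f2comb big1 // => i _; rewrite ffunE. Qed.

Lemma span0 m (b : {ffun 'I_m -> word n}) : 0 \in span b.
Proof. by apply/imsetP; exists [ffun => false]; rewrite ?f2comb0. Qed.

Lemma spanD m (b : {ffun 'I_m -> word n}) x y :
  x \in span b -> y \in span b -> x + y \in span b.
Proof.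
move=> /imsetP[c _ ->] /imsetP[c' _ ->]; rewrite f2combD.
by apply/imsetP; exists [ffun i => c i (+) c' i].
Qed.

Lemma mem_span m (b : {ffun 'I_m -> word n}) j : b j \in span b.
Proof.
apply/imsetP; exists [ffun i => i == j] => //.
rewrite /f2comb (bigD1 j) //= ffunE eqxx big1 ?addr0 // => i /negbTE ij.
by rewrite ffunE ij.
Qed.

Lemma span_sub m (b : {ffun 'I_m -> word n}) (S : {set word n}) :
  0 \in S -> (forall x y, x \in S -> y \in S -> x + y \in S) ->
  (forall j, b j \in S) -> span b \subset S.
Proof.
move=> S0 SD Sb; apply/subsetP=> _ /imsetP[c _ ->].
rewrite /f2comb; apply: (big_ind (fun w => w \in S)) => // i _.
by case: (c i).
Qed.

Lemma span_cons m z (g : {ffun 'I_m -> word n}) y :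
  (y \in span (fcons z g)) = (y \in span g) || (y + z \in span g).
Proof.
apply/imsetP/orP => [[c _ ->]|[H|H]].
  rewrite (fcons_eta c) f2comb_cons.
  case: (c ord0) => /=; last by left; rewrite add0r imset_f.
  by right; rewrite addrC addKx imset_f.
  case/imsetP: H => c _ ->; exists (fcons false c) => //.
  by rewrite f2comb_cons add0r.
case/imsetP: H => c _ e; exists (fcons true c) => //.
by rewrite f2comb_cons -e /= [y + z]addrC addKx.
Qed.

Lemma indep_cons m z (g : {ffun 'I_m -> word n}) :
  indep (fcons z g) = indep g && (z \notin span g).
Proof.
apply/forallP/andP => [H|[/forallP Hg Hz] c].
  split.
    apply/forallP=> c; apply/implyP=> c0.
    move: (H (fcons false c)); rewrite f2comb_cons add0r c0 /= forall_cons.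
    by case/andP.
  apply/imsetP=> -[c _ e].
  move: (H (fcons true c)); rewrite f2comb_cons -e addxx eqxx /= forall_cons.
  by [].
rewrite (fcons_eta c) f2comb_cons forall_cons.
case: (c ord0) => /=.
  apply/implyP => /eqP e; case/negP: Hz; apply/imsetP.
  exists (ftail c) => //.
  by rewrite -[z]addr0 -e addrA addxx add0r.
rewrite add0r; exact: Hg.
Qed.

Lemma card_span m (b : {ffun 'I_m -> word n}) : indep b -> #|span b| = (2 ^ m)%N.
Proof.
move=> /forallP ib; rewrite card_imset ?card_ffun ?card_bool ?card_ord //.
move=> c c' e; apply/ffunP=> i.
have : f2comb b [ffun i => c i (+) c' i] == 0 by rewrite -f2combD e addxx.
move/implyP: (ib [ffun i => c i (+) c' i]) => H /H /forallP /(_ i).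
by rewrite ffunE; case: (c i); case: (c' i).
Qed.

End Span.

Section Perp.
Variable n : nat.
Notation B := (@trace_ip n).

Definition Pp m (g : {ffun 'I_m -> word n}) : {set word n} :=
  [set x | [forall j, B x (g j) == 0]].

Lemma Pp_cons m z (g : {ffun 'I_m -> word n}) x :
  (x \in Pp (fcons z g)) = (x \in Pp g) && (B x z == 0).
Proof. by rewrite !inE (forall_cons _ _ (fun w => B x w == 0)) andbC. Qed.

Lemma Pp0 m (g : {ffun 'I_m -> word n}) : 0 \in Pp g.
Proof. by rewrite inE; apply/forallP=> j; rewrite B0l. Qed.

Lemma PpD m (g : {ffun 'I_m -> word n}) x y :
  x \in Pp g -> y \in Pp g -> x + y \in Pp g.
Proof.
rewrite !inE => /forallP Hx /forallP Hy; apply/forallP=> j.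
by rewrite BDl (eqP (Hx j)) (eqP (Hy j)) addr0.
Qed.

Lemma B0or1 (u w : word n) : B u w = 0 \/ B u w = F1.
Proof. by case/orP: (B01 u w) => /eqP ->; [left|right]. Qed.

Lemma lemL m (f : {ffun 'I_m -> word n}) y :
  indep f -> y \notin span f -> exists2 x, x \in Pp f & B x y = F1.
Proof.
elim: m f y => [|m IH] f y.
  move=> _ ny.
  have y0 : y != 0.
    apply: contra ny => /eqP ->; exact: span0.
  have [x Hx] := Bnondeg y0; exists x => //.
  by rewrite inE; apply/forallP=> -[].
rewrite (fcons_eta f); set z := f ord0; set g := ftail f.
rewrite indep_cons span_cons => /andP[ig zg] /norP[yg yzg].
have [a aP aZ] := IH g z ig zg.
pose y' := if B a y == F1 then y + z else y.
have y'g : y' \notin span g by rewrite /y'; case: ifP.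
have [x xP xY] := IH g y' ig y'g.
have [xz|xz] := B0or1 x z.
  exists x; first by rewrite Pp_cons xP xz eqxx.
  move: xY; rewrite /y'; case: ifP => // _; by rewrite BDr xz addr0.
exists (x + a); first by rewrite Pp_cons PpD //= BDl xz aZ.
rewrite BDl; move: xY; rewrite /y'.
case: (B0or1 a y) => ->; rewrite ?eqxx //=.
  by move=> ->.
rewrite BDr xz; case: (B0or1 x y) => -> //.
Qed.

Lemma card_Pp m (f : {ffun 'I_m -> word n}) :
  indep f -> (#|Pp f| * 2 ^ m = 4 ^ n)%N.
Proof.
elim: m f => [|m IH] f.
  move=> _; rewrite expn0 muln1.
  have -> : Pp f = setT by apply/setP=> x; rewrite !inE; apply/forallP=> -[].
  by rewrite cardsT card_ffun F4_card card_ord.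
rewrite (fcons_eta f); set z := f ord0; set g := ftail f.
rewrite indep_cons => /andP[ig zg].
have [a aP aZ] := lemL ig zg.
rewrite -(IH g ig) expnS mulnA; congr (_ * _)%N.
set P' := Pp (fcons z g).
pose K := [set x | B x z == 0].
have Kin x : (x \in K) = (B x z == 0) by rewrite inE.
have E : Pp g :&: K = P'.
  by apply/setP=> x; rewrite /P' Pp_cons in_setI Kin.
have E2 : Pp g :\: K = [set a + x | x in P'].
  apply/setP=> x; rewrite in_setD Kin; apply/andP/imsetP.
    case=> xz xP; exists (a + x); last by rewrite addKx.
    rewrite /P' Pp_cons PpD //= BDl aZ; by case: (B0or1 x z) xz => ->.
  case=> x' x'P ->; move: x'P; rewrite /P' Pp_cons => /andP[x'P /eqP x'z].
  by rewrite PpD // BDl aZ x'z.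
rewrite -(cardsID K (Pp g)) E E2 card_imset; last first.
  exact: addrI.
by rewrite addnn -muln2.
Qed.
End Perp.

Lemma count_cons (T : finType) m (A : {set {ffun 'I_m -> T}})
    (A' : {set {ffun 'I_m.+1 -> T}}) (S : {ffun 'I_m -> T} -> {set T}) c :
  (forall x g, (fcons x g \in A') = (g \in A) && (x \in S g)) ->
  (forall g, g \in A -> #|S g| = c) -> #|A'| = (#|A| * c)%N.
Proof.
move=> HA HS.
rewrite -sum1_card.
rewrite (reindex (fun p : {ffun 'I_m -> T} * T => fcons p.2 p.1)); last first.
  exists (fun b => (ftail b, b ord0)) => [[g x] _|b _] /=.
    by rewrite ftail_fcons fcons0.
  by rewrite -fcons_eta.
rewrite (eq_bigl (fun p => (p.1 \in A) && (p.2 \in S p.1))); last first.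
  by move=> p; rewrite HA.
rewrite -(pair_big_dep (mem A) (fun g x => x \in S g) (fun _ _ => 1%N)) /=.
rewrite -sum_nat_const; apply: eq_bigr => g gA.
by rewrite sum1_card HS.
Qed.

Section Count.
Variable n : nat.
Notation B := (@trace_ip n).
Variable v : word n.
Hypothesis v0 : v != 0.

Definition orth m (b : {ffun 'I_m -> word n}) :=
  [forall i, forall j, B (b i) (b j) == 0].

Lemma orth_cons m x (g : {ffun 'I_m -> word n}) :
  orth (fcons x g) = orth g && (x \in Pp g).
Proof.
apply/forallP/andP => [H|[/forallP og /[!inE] /forallP xP] i].
  split.
    apply/forallP=> i; apply/forallP=> j.
    by move: (H (lift ord0 i)) => /forallP /(_ (lift ord0 j)); rewrite !fconsS.
  rewrite inE; apply/forallP => j.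
  by move: (H ord0) => /forallP/(_ (lift ord0 j)); rewrite fcons0 fconsS.
apply/forallP=> j.
case: (unliftP ord0 i) => [i' ->|->]; case: (unliftP ord0 j) => [j' ->|->];
  rewrite ?fconsS ?fcons0 ?Bxx //.
- by move/forallP: (og i').
- by rewrite BC.
Qed.

Lemma indep_nil (g : {ffun 'I_0 -> word n}) : indep g.
Proof. by apply/forallP=> c; apply/implyP=> _; apply/forallP=> -[]. Qed.

Lemma span_nil (g : {ffun 'I_0 -> word n}) y : (y \in span g) = (y == 0).
Proof.
apply/imsetP/eqP => [[c _ ->]|->]; first by rewrite /f2comb big_ord0.
by exists [ffun => false]; rewrite // /f2comb big_ord0.
Qed.

Lemma base_card (A : {set {ffun 'I_1 -> word n}}) :
  (forall b, (b \in A) = [&& indep b, orth b & b ord_max == v]) -> #|A| = 1%N.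
Proof.
move=> HA; apply/eqP/cards1P; exists [ffun => v]; apply/setP=> b.
rewrite HA inE; apply/idP/eqP => [/and3P[_ _ /eqP bv]|->].
  by apply/ffunP=> i; rewrite ffunE (ord1 i) -bv; congr (b _); apply/val_inj.
rewrite ffunE eqxx andbT (fcons_eta [ffun => v]) indep_cons orth_cons.
rewrite indep_nil span_nil ffunE v0 /=.
rewrite inE; apply/andP; split; apply/forallP=> -[] //.
Qed.

Definition Qset m := [set b : {ffun 'I_m.+1 -> word n} |
   [&& indep b, orth b & b ord_max == v]].

Lemma Qin m b : (b \in Qset m) = [&& indep b, orth b & b ord_max == v].
Proof. by rewrite inE. Qed.

Lemma span_Pp m (g : {ffun 'I_m -> word n}) : orth g -> span g \subset Pp g.
Proof.
move=> /forallP og; apply: span_sub; [exact: Pp0|exact: PpD|].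
move=> j; rewrite inE; apply/forallP=> i; exact: (forallP (og j) i).
Qed.

Lemma card_Pp2 m (g : {ffun 'I_m -> word n}) :
  indep g -> #|Pp g| = (2 ^ (2 * n - m))%N.
Proof.
move=> ig; have H := card_Pp ig.
have le : (m <= 2 * n)%N.
  have e4 : (4 ^ n = 2 ^ (2 * n))%N by rewrite expnM.
  rewrite -(leq_exp2l _ _ (isT : (1 < 2)%N)) -e4 -H.
  by rewrite leq_pmull // card_gt0; apply/set0Pn; exists 0; exact: Pp0.
apply/eqP; rewrite -(eqn_pmul2r (expn_gt0 2 m)) H -expnD subnK //.
by rewrite expnM.
Qed.

Lemma Q_card m :
  #|Qset m| = (\prod_(1 <= j < m.+1) (2 ^ (2 * n - j) - 2 ^ j))%N.
Proof.
elim: m => [|m IH].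
  by rewrite big_geq // (base_card (A := Qset 0)) // => b; rewrite inE.
rewrite big_nat_recr //= -IH.
apply: (count_cons (S := fun g => Pp g :\: span g)).
  move=> x g; rewrite !Qin in_setD indep_cons orth_cons fcons_max.
  by case: (indep g) (x \in span g) (orth g) (x \in Pp g) (g ord_max == v)
     => [] [] [] [] [].
move=> g; rewrite Qin => /and3P[ig og _].
rewrite cardsD (setIidPr (span_Pp og)) card_Pp2 // card_span //.
Qed.

Definition Rset (C : {set word n}) m := [set b : {ffun 'I_m.+1 -> word n} |
   [&& indep b, [forall j, b j \in C] & b ord_max == v]].

Lemma Rin C m b : (b \in Rset C m) = [&& indep b, [forall j, b j \in C] & b ord_max == v].
Proof. by rewrite inE. Qed.

Lemma R_card (C : {set word n}) m :
  0 \in C -> (forall x y, x \in C -> y \in C -> x + y \in C) -> v \in C ->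
  #|Rset C m| = (\prod_(1 <= j < m.+1) (#|C| - 2 ^ j))%N.
Proof.
move=> C0 CD vC.
elim: m => [|m IH].
  rewrite big_geq // (base_card (A := Rset C 0)) // => b; rewrite Rin.
  apply/and3P/and3P => -[ib H bv]; split=> //.
    apply/forallP=> i; apply/forallP=> j.
    by rewrite (ord1 i) (ord1 j) Bxx.
  apply/forallP=> i; have -> : i = ord_max by apply/val_inj; rewrite /= (ord1 i).
  by rewrite (eqP bv).
  rewrite big_nat_recr //= -IH.
apply: (count_cons (S := fun g => C :\: span g)).
  move=> x g; rewrite !Rin in_setD indep_cons fcons_max.
  rewrite (forall_cons _ _ (fun w => w \in C)).
  by case: (indep g) (x \in span g) (x \in C) [forall j, g j \in C] (g ord_max == v)
     => [] [] [] [] [].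
move=> g; rewrite Rin => /and3P[ig /forallP gC _].
by rewrite cardsD (setIidPr (span_sub C0 CD gC)) card_span.
Qed.

End Count.

Section Main.
Variable n : nat.
Notation B := (@trace_ip n).
Variable v : word n.
Hypothesis v0 : v != 0.
Variable m : nat.

Definition Sset := [set C : {set word n} |
  [&& additive_code_dim m.+1 C, self_orthogonal C & v \in C]].

Lemma code_props (C : {set word n}) : additive_code_dim m.+1 C ->
  [/\ 0 \in C, (forall x y, x \in C -> y \in C -> x + y \in C) & #|C| = (2 ^ m.+1)%N].
Proof.
case/existsP=> b /andP[ib /eqP eC].
have ib' : indep b by [].
have -> : C = span b by [].
split; [exact: span0 | exact: spanD | exact: card_span].
Qed.

Lemma iso_span k (b : {ffun 'I_k -> word n}) : orth b -> self_orthogonal (span b).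
Proof.
move=> ob; apply/forallP => u; apply/implyP => uC; apply/forallP => w; apply/implyP => wC.
have uP : u \in Pp b by apply: (subsetP (span_Pp ob)).
have sub : span b \subset [set w | B u w == 0].
  apply: span_sub.
  - by rewrite inE BC B0l.
  - by move=> x y; rewrite !inE BDr => /eqP-> /eqP->; rewrite addr0.
  - by move=> j; move: uP; rewrite !inE => /forallP.
by move: (subsetP sub w wC); rewrite inE.
Qed.

Lemma span_S b : b \in Qset v m -> span b \in Sset.
Proof.
rewrite Qin => /and3P[ib ob /eqP bv]; rewrite inE; apply/and3P; split.
- by apply/existsP; exists b; apply/andP; split.
- exact: iso_span.
- by rewrite -bv mem_span.
Qed.

Lemma Q_R (C : {set word n}) b : C \in Sset ->
  ((b \in Qset v m) && (span b == C)) = (b \in Rset v C m).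
Proof.
rewrite inE => /and3P[cC sC vC].
have [C0 CD cardC] := code_props cC.
rewrite Qin Rin; apply/andP/and3P => [[/and3P[ib ob bv] /eqP e]|[ib /forallP bC bv]].
  by split=> //; apply/forallP=> j; rewrite -e mem_span.
have sbC : span b \subset C by apply: span_sub.
have e : span b == C by rewrite eqEcard sbC cardC card_span ?leqnn.
split=> //; apply/and3P; split=> //.
apply/forallP=> i; apply/forallP=> j.
by move/forallP: sC => /(_ (b i)) /implyP /(_ (bC i)) /forallP /(_ (b j)) /implyP /(_ (bC j)).
Qed.

Lemma main_nat :
  #|Qset v m| = (#|Sset| * \prod_(1 <= j < m.+1) (2 ^ m.+1 - 2 ^ j))%N.
Proof.
rewrite -sum1_card (partition_big (fun b => span b) (fun C => C \in Sset)); last first.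
  by move=> b; apply: span_S.
rewrite -sum_nat_const; apply: eq_bigr => C CS.
rewrite (eq_bigl (fun b => b \in Rset v C m)); last by move=> b; rewrite /= Q_R.
rewrite sum1_card.
move: CS; rewrite inE => /and3P[cC _ vC].
have [C0 CD cardC] := code_props cC.
by rewrite R_card // cardC.
Qed.
End Main.

Lemma nat_identity (n m s : nat) : (m.+1 <= n)%N ->
  (\prod_(1 <= j < m.+1) (2 ^ (2 * n - j) - 2 ^ j) =
   s * \prod_(1 <= j < m.+1) (2 ^ m.+1 - 2 ^ j))%N ->
  (s * \prod_(1 <= j < m.+1) (2 ^ j - 1) = \prod_(1 <= j < m.+1) (2 ^ (2 * (n - j)) - 1))%N.
Proof.
move=> kn H.
have E1 : (\prod_(1 <= j < m.+1) (2 ^ (2 * n - j) - 2 ^ j) =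
  \prod_(1 <= j < m.+1) 2 ^ j * \prod_(1 <= j < m.+1) (2 ^ (2 * (n - j)) - 1))%N.
  rewrite -big_split /=; apply: eq_big_nat => j /andP[j1 jk].
  rewrite mulnBr muln1 -expnD; congr (2 ^ _ - _)%N.
  have : (j <= n)%N by apply: leq_trans (ltnW jk) kn.
  lia.
have E2 : (\prod_(1 <= j < m.+1) (2 ^ m.+1 - 2 ^ j) =
  \prod_(1 <= j < m.+1) 2 ^ j * \prod_(1 <= j < m.+1) (2 ^ (m.+1 - j) - 1))%N.
  rewrite -big_split /=; apply: eq_big_nat => j /andP[j1 jk].
  rewrite mulnBr muln1 -expnD; congr (2 ^ _ - _)%N; lia.
have E3 : (\prod_(1 <= j < m.+1) (2 ^ (m.+1 - j) - 1) =
    \prod_(1 <= j < m.+1) (2 ^ j - 1))%N.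
  rewrite big_nat_rev; apply: eq_big_nat => j /andP[j1 jk].
  congr (2 ^ _ - _)%N; lia.
move: H; rewrite E1 E2 E3 mulnCA => /eqP; rewrite eqn_pmul2l.
  by move/eqP.
by rewrite prodn_gt0 // => j; rewrite expn_gt0.
Qed.

Theorem lemmaA2 (n k : nat) (v : word n) :
  v != 0 -> (1 <= k)%N -> (k <= n)%N ->
  (sigma k v)%:R =
    \prod_(1 <= i < k) ((2%:R ^+ (2 * (n - i)) - 1) / (2%:R ^+ i - 1) : rat).
Proof.
move=> v0; case: k => // m _ kn.
have H1 := Q_card v0 m.
have H2 := main_nat v0 m.
have H : (sigma m.+1 v * \prod_(1 <= j < m.+1) (2 ^ j - 1) =
   \prod_(1 <= j < m.+1) (2 ^ (2 * (n - j)) - 1))%N.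
  apply: nat_identity => //; by rewrite -H1 H2.
have Dpos : (0 < \prod_(1 <= j < m.+1) (2 ^ j - 1))%N.
  rewrite big_seq; apply: (big_ind (fun x => 0 < x)%N) => // [x y|j].
    by rewrite muln_gt0 => -> ->.
  rewrite mem_index_iota => /andP[j1 _]; rewrite subn_gt0.
  by rewrite -[1%N]/(2 ^ 0)%N ltn_exp2l.
have Er : forall j, (1 <= j)%N -> (2 ^ j - 1)%:R = (2%:R ^+ j - 1 : rat).
  move=> j j1; rewrite natrB ?natrX // expn_gt0 //.
rewrite prodf_div.
have -> : \prod_(1 <= i < m.+1) (2%:R ^+ (2 * (n - i)) - 1 : rat) =
   (\prod_(1 <= j < m.+1) (2 ^ (2 * (n - j)) - 1))%N%:R.
  rewrite natr_prod; apply: eq_big_nat => j _; rewrite natrB ?natrX // expn_gt0 //.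
have -> : \prod_(1 <= i < m.+1) (2%:R ^+ i - 1 : rat) =
   (\prod_(1 <= j < m.+1) (2 ^ j - 1))%N%:R.
  rewrite natr_prod; apply: eq_big_nat => j /andP[j1 _]; by rewrite Er.
rewrite -H natrM mulfK //.
by rewrite pnatr_eq0 -lt0n.
Qed.
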